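(* Let $m\ge2$ and let $\mathbb N$ be the directed cycle $1\to2\to\cdots\to m\to1$, the arc from $i-1$ to $i$ (vertex $0$ being vertex $m$) carrying a real matrix $C_i$ with $n$ columns. There exist matrices $C_1,\dots,C_m$ with $\ker C_i\neq 0$ for all $i$ such that $\bar{\mathbb N}$ is well-configured (i.e. $C_ix_i=C_ix_{i-1}$ for all $i$, with $x_0:=x_m$, implies $x_1=\cdots=x_m$ for all $x_1,\dots,x_m\in\mathbb R^n$) if and only if $m\le n$.
   Context: $\bar{\mathbb N}$ denotes the graph $\mathbb N$ together with the matrices assigned to its arcs; well-configuredness is as described in the claim. *)

(* Defs.v *)
From HB Require Import structures.
From mathcomp Require Import all_boot all_order all_algebra.
From mathcomp Require Import all_classical all_reals.
Set Implicit Arguments. Unset Strict Implicit. Unset Printing Implicit Defensive.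
Import GRing.Theory Num.Theory.
Local Open Scope ring_scope.

(* Vertices of the directed cycle N are 'I_m (vertex k+1 of the paper is k).
   The arc into vertex i comes from its cyclic predecessor ord_pred i
   (the paper's i-1, with vertex 0 := vertex m) and carries C i,
   a real matrix with r i rows and n columns. *)

Definition nontrivial_kernel (R : ringType) (p n : nat) (C : 'M[R]_(p, n)) : Prop :=
  exists v : 'cV[R]_n, v != 0 /\ C *m v = 0.

Definition well_configured (R : ringType) (m n : nat) (r : 'I_m -> nat)
  (C : forall i : 'I_m, 'M[R]_(r i, n)) : Prop :=
  forall x : 'I_m -> 'cV[R]_n,
    (forall i : 'I_m, C i *m x i = C i *m x (ord_pred i)) ->
    forall i j : 'I_m, x i = x j.

(* Main.v *)
Require Import Defs.
From HB Require Import structures.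
From mathcomp Require Import all_boot all_order all_algebra.
From mathcomp Require Import all_classical all_reals.
From mathcomp Require Import zify.
Import GRing.Theory Num.Theory.
Local Open Scope ring_scope.

Lemma ord_pred_val m (i : 'I_m) : (0 < i)%N -> val (ord_pred i) = i.-1.
Proof.
move=> hi /=. have hm := ltn_ord i.
have -> : ((i + m).-1 = i.-1 + m)%N by lia.
rewrite modnDr modn_small //; lia.
Qed.

Lemma ord_pred_val0 m (i : 'I_m) : val i = 0%N -> val (ord_pred i) = m.-1.
Proof.
move=> hi /=. rewrite hi add0n modn_small //. have := ltn_ord i; lia.
Qed.

Lemma cyc_const (T : Type) m (f : 'I_m -> T) :
  (forall i, f i = f (ord_pred i)) -> forall i j, f i = f j.
Proof.
move=> h.
have key : forall k (hk : (k < m)%N) i, val i = k -> f i = f (Ordinal (leq_ltn_trans (leq0n k) hk)).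
  elim=> [|k IH] hk i hi.
    by congr f; apply/val_inj.
  rewrite h. have hk' : (k < m)%N by lia.
  rewrite (IH hk' (ord_pred i)); first by congr f; apply/val_inj.
  by rewrite ord_pred_val ?hi //.
move=> i j.
rewrite (key _ (ltn_ord i) i erefl) (key _ (ltn_ord j) j erefl).
by congr f; apply/val_inj.
Qed.

Lemma tele (R : zmodType) m (f : 'I_m -> R) :
  \sum_i (f i - f (ord_pred i)) = 0.
Proof.
rewrite sumrB (reindex_inj (@ord_pred_inj m)) /=. by rewrite subrr.
Qed.
Definition Cm (R : ringType) n m (i : 'I_m) : 'M[R]_(n, n) :=
  \matrix_(a < n, b < n) ((a == b) && (val a != val i))%:R.

Lemma Cmul (R : ringType) n m (i : 'I_m) (v : 'cV[R]_n) a b :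
  (@Cm R n m i *m v) a b = (val a != val i)%:R * v a b.
Proof.
rewrite !mxE (bigD1 a) //= big1 ?addr0; first by rewrite mxE eqxx.
move=> c hc; rewrite mxE eq_sym (negbTE hc) /= mul0r //.
Qed.

Lemma wc_Cm (R : ringType) n m :
  well_configured (fun i : 'I_m => @Cm R n m i).
Proof.
move=> x hx i j; apply/matrixP => a b.
pose f k := x k a b.
suff h : forall k, f k = f (ord_pred k) by exact: (cyc_const _ _ _ h i j).
move=> k.
have hk := congr1 (fun M : 'M[R]_(n,1) => M a b) (hx k); rewrite /= !Cmul in hk.
case: (eqVneq (val a) (val k)) => hak; last first.
  by move: hk; rewrite hak /= !mulr1n !mul1r.
apply/eqP; rewrite -subr_eq0; apply/eqP.
have := tele _ _ f; rewrite (bigD1 k) //= big1 ?addr0 //.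
move=> l hl; move: hk => _.
have hx' := congr1 (fun M : 'M[R]_(n,1) => M a b) (hx l); rewrite /= !Cmul in hx'.
have : val a != val l by rewrite hak; apply: contra hl => /eqP h; apply/eqP/val_inj.
move=> hal; move: hx'; rewrite hal !mul1r /f => ->; by rewrite subrr.
Qed.

Lemma indep (R : fieldType) m n (r : 'I_m -> nat) (C : forall i : 'I_m, 'M[R]_(r i, n))
  (v : 'I_m -> 'cV[R]_n) :
  (forall i, v i != 0) -> (forall i, C i *m v i = 0) -> well_configured C ->
  forall c : 'I_m -> R, \sum_i c i *: v i = 0 -> forall i, c i = 0.
Proof.
move=> vnz hv wc c hs.
pose x (k : 'I_m) := \sum_(j | ((j : 'I_m) <= k)%N) c j *: v j.
have cl : forall k, x k - x (ord_pred k) = c k *: v k.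
  move=> k; rewrite /x.
  case: (eqVneq (val k) 0%N) => hk.
    rewrite (eq_bigl (pred1 k)); last first.
      by move=> j /=; rewrite -val_eqE /= hk; lia.
    rewrite big_pred1_eq (eq_bigl predT) ?hs ?subr0 //.
    have e := ord_pred_val0 _ _ hk; move=> j /=; rewrite /= in e; rewrite e; have := ltn_ord j; lia.
  rewrite (bigD1 k) //= (eq_bigl (fun j : 'I_m => (j <= ord_pred k)%N)) ?addrK //.
  have e := ord_pred_val _ k; rewrite /= in e; move=> j /=; rewrite e ?lt0n //.
  case: (eqVneq (val j) (val k)) => hjk.
    have -> : j = k by apply: val_inj.
    rewrite eqxx andbF; move: hk; rewrite /= => hk; lia.
  have -> : (j != k) = true by apply/eqP => h; rewrite h eqxx in hjk.
  move: hk hjk; rewrite andbT /= => hk hjk; lia.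
move=> i.
have : x i = x (ord_pred i).
  apply: (wc x) => k.
  apply/eqP; rewrite -subr_eq0 -mulmxBr cl -scalemxAr hv scaler0 //.
move=> /eqP; rewrite -subr_eq0 cl scaler_eq0 (negbTE (vnz i)) orbF.
by move/eqP.
Qed.

Lemma le_mn (R : fieldType) m n (v : 'I_m -> 'cV[R]_n) :
  (forall c : 'I_m -> R, \sum_i c i *: v i = 0 -> forall i, c i = 0) ->
  (m <= n)%N.
Proof.
move=> hind.
pose V := \matrix_(i < m, a < n) v i a 0.
have : row_free V.
  rewrite -kermx_eq0; apply/eqP/row_matrixP => l; rewrite row0.
  set u := row l (kermx V).
  have hu : u *m V = 0 by apply/sub_kermxP; exact: row_sub.
  have hs : \sum_i u 0 i *: v i = 0.
    apply/matrixP => a b; rewrite (ord1 b).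
    have e : (0 : R) = (u *m V) 0 a by rewrite hu mxE.
    rewrite summxE [RHS]mxE [RHS]e.
    rewrite mulmx_sum_row summxE; apply: eq_bigr => i _; by rewrite !mxE.
  apply/rowP => i; rewrite [RHS]mxE; exact: (hind _ hs i).
rewrite /row_free => /eqP <-; exact: rank_leq_col.
Qed.

Theorem corollary1 (R : realType) (m n : nat) (hm : (2 <= m)%N) :
  (exists (r : 'I_m -> nat) (C : forall i : 'I_m, 'M[R]_(r i, n)),
      (forall i : 'I_m, nontrivial_kernel (C i)) /\ well_configured C)
  <-> (m <= n)%N.
Proof.
split.
  case=> r [C [hk wc]].
  have [v hv] := fin_all_exists hk.
  apply: (le_mn _ _ _ v); apply: (indep _ _ _ _ C v) => // i; by case: (hv i).
move=> hmn.
exists (fun _ => n), (fun i => @Cm R n m i); split; last exact: wc_Cm.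
move=> i; exists (\col_b (val b == val i)%:R); split.
  apply/eqP => /matrixP /(_ (Ordinal (leq_trans (ltn_ord i) hmn)) 0).
  rewrite !mxE /= eqxx => /eqP; by rewrite oner_eq0.
apply/matrixP => a b; rewrite Cmul !mxE; case: eqP => _ /=; by rewrite ?mul0r ?mulr0.
Qed.
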